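(* Let $n>1$. For every index $i=0,\dots,n$ and all $\mathbf x,\mathbf y\in I_{n-1}$ we have $$\bigl\|(\Phi\circ\Delta_i)(\mathbf x)-(\Phi\circ\Delta_i)(\mathbf y)\bigr\|\le c_6\,6^n\,\|\mathbf x-\mathbf y\|,$$ where $c_6=\sqrt3/8$ and $\|\cdot\|$ is the sup-norm.
   Context: $I_m=\{(x_1,\dots,x_m)\in\mathbb{R}^m:-2\le x_1\le\cdots\le x_m\le2\}$. Maps $\Delta_i:I_{n-1}\to I_n$ ($0\le i\le n$): $\Delta_0(x_1,\dots,x_{n-1})=(-2,x_1,\dots,x_{n-1})$; for $0<i<n$, $\Delta_i(x_1,\dots,x_{n-1})=(x_1,\dots,x_{i-1},x_i,x_i,x_{i+1},\dots,x_{n-1})$; $\Delta_n(x_1,\dots,x_{n-1})=(x_1,\dots,x_{n-1},2)$. For $\mathbf c\in\mathbb{R}^n$ let $h_{\mathbf c}=x^n+c_1x^{n-1}+\cdots+c_n$, and for $\mathbf b\in\mathbb{R}^n$ let $g_{\mathbf b}=(x^{2n}+1)+b_1(x^{2n-1}+x)+\cdots+b_{n-1}(x^{n+1}+x^{n-1})+b_nx^n$. $\Psi(\mathbf r)=\mathbf c$ where $(x-r_1)\cdots(x-r_n)=h_{\mathbf c}$; $\mathrm X(\mathbf c)=\mathbf b$ where $x^nh_{\mathbf c}(x+1/x)=g_{\mathbf b}$; $\Phi=\mathrm X\circ\Psi$. *)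

(* Defs.v *)
From HB Require Import structures.
From mathcomp Require Import all_boot all_order all_algebra.
From mathcomp Require Import reals.
Set Implicit Arguments. Unset Strict Implicit. Unset Printing Implicit Defensive.
Import Order.TTheory GRing.Theory Num.Theory.
Local Open Scope ring_scope.

(* Vectors in R^m are functions 'I_m -> R; the 0-based ordinal j stands for
   the paper's 1-based coordinate j+1. *)

Section Defs.
Variable R : realType.

(* 1-based coordinate access: coord x k = x_k for 1 <= k <= m, 0 otherwise. *)
Definition coord (m : nat) (x : 'I_m -> R) (k : nat) : R :=
  if insub k.-1 is Some j then (if k == 0%N then 0 else x j) else 0.

Definition in_I (m : nat) (x : 'I_m -> R) : Prop :=
  (forall j : 'I_m, -2 <= x j /\ x j <= 2) /\
  (forall j k : 'I_m, (j <= k)%N -> x j <= x k).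

Definition ext (n : nat) (x : 'I_n.-1 -> R) (k : nat) : R :=
  if k == 0%N then -2 else if (n <= k)%N then 2 else coord x k.

(* Coordinate k (1-based) of Delta_i x is
   x_k if k <= i and x_(k-1) otherwise, with the convention x_0 = -2, x_n = 2.
   This gives exactly: Delta_0 x = (-2, x_1..x_(n-1)),
   Delta_i x = (x_1..x_i, x_i, x_(i+1)..x_(n-1)) for 0<i<n,
   Delta_n x = (x_1..x_(n-1), 2). *)
Definition Delta (n i : nat) (x : 'I_n.-1 -> R) : 'I_n -> R :=
  fun j => let k := j.+1 in if (k <= i)%N then ext x k else ext x k.-1.

(* Psi(r) = c where (x - r_1)...(x - r_n) = x^n + c_1 x^(n-1) + ... + c_n. *)
Definition Psi (n : nat) (r : 'I_n -> R) : 'I_n -> R :=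
  fun j => (\prod_(l < n) ('X - (r l)%:P))`_(n - j.+1).

Definition cext (n : nat) (c : 'I_n -> R) (k : nat) : R :=
  if k == 0%N then 1 else coord c k.

(* x^n h_c(x + 1/x) = sum_(k=0..n) c_k x^n (x+1/x)^(n-k)
                    = sum_(k=0..n) c_k x^k (x^2+1)^(n-k), c_0 = 1. *)
Definition Xpoly (n : nat) (c : 'I_n -> R) : {poly R} :=
  \sum_(k < n.+1) cext c k *: ('X^k * ('X^2 + 1) ^+ (n - k)).

(* X(c) = b where x^n h_c(x+1/x) = g_b, i.e. b_k is the coefficient of
   x^(2n-k) in x^n h_c(x+1/x), k = 1..n. *)
Definition Xmap (n : nat) (c : 'I_n -> R) : 'I_n -> R :=
  fun j => (Xpoly c)`_(2 * n - j.+1).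

Definition Phi (n : nat) (r : 'I_n -> R) : 'I_n -> R := Xmap (Psi r).

Definition supnorm (m : nat) (v : 'I_m -> R) : R :=
  \big[Num.max/0]_(j < m) `|v j|.

Definition c6 : R := Num.sqrt 3 / 8.

End Defs.

(* Main.v *)
Require Import Defs.
From HB Require Import structures.
From mathcomp Require Import all_boot all_order all_algebra.
From mathcomp Require Import reals.
From mathcomp Require Import ring lra.
Import Order.TTheory GRing.Theory Num.Theory.
Local Open Scope ring_scope.

Definition UU {R : realType} : {poly R} := 'X^2 + 1.
Definition QQ {R : realType} (r : R) : {poly R} := UU - r *: 'X.
Definition TT {R : realType} (m : nat) (p : {poly R}) : {poly R} :=
  \sum_(j < m.+1) p`_j *: ('X^(m - j) * UU ^+ j).

Lemma TM {R : realType} m (p : {poly R}) r : (size p <= m.+1)%N ->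
  TT m.+1 (p * ('X - r%:P)) = QQ r * TT m p.
Proof.
move=> hs.
have -> : p * ('X - r%:P) = p * 'X - r *: p by rewrite mulrBr (mulrC p (r%:P)) mul_polyC.
rewrite /TT.
under eq_bigr do rewrite coefB coefZ scalerBl -scalerA.
rewrite sumrB -scaler_sumr.
rewrite big_ord_recl coefMX /= scale0r add0r.
rewrite [X in _ - r *: X]big_ord_recr /= (nth_default 0 hs) scale0r addr0.
have -> : \sum_(i < m.+1) (p * 'X)`_(bump 0 i) *: ('X^(m.+1 - bump 0 i) * UU ^+ bump 0 i)
   = UU * \sum_(j < m.+1) p`_j *: ('X^(m - j) * UU ^+ j).
  rewrite mulr_sumr; apply: eq_bigr => j _.
  rewrite /bump /= add1n coefMX /= subSS exprS -scalerAr; congr (_ *: _).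
  by rewrite mulrCA.
have -> : \sum_(i < m.+1) p`_(widen_ord (leqnSn m.+1) i) *:
      ('X^(m.+1 - widen_ord (leqnSn m.+1) i) * UU ^+ widen_ord (leqnSn m.+1) i)
   = 'X * \sum_(j < m.+1) p`_j *: ('X^(m - j) * UU ^+ j).
  rewrite mulr_sumr; apply: eq_bigr => j _ /=.
  rewrite subSn; last by rewrite -ltnS.
  by rewrite exprS -scalerAr mulrA.
by rewrite /QQ mulrBl scalerAl.
Qed.

Lemma Tprod {R : realType} (f : nat -> R) k :
  TT k (\prod_(0 <= l < k) ('X - (f l)%:P)) = \prod_(0 <= l < k) QQ (f l).
Proof.
elim: k => [|k IH].
  rewrite !big_geq // /TT big_ord1 coef1 /= scale1r expr0 mulr1 subnn expr0.
  done.
rewrite !big_nat_recr //= TM; last by rewrite size_prod_XsubC size_iota subn0.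
by rewrite IH mulrC.
Qed.

Lemma XpolyPsi {R : realType} n (g : nat -> R) :
  Xpoly (Psi (fun l : 'I_n => g l)) = \prod_(0 <= l < n) QQ (g l).
Proof.
set p := \prod_(0 <= l < n) ('X - (g l)%:P).
have hP : \prod_(l < n) ('X - (g l)%:P) = p by rewrite /p big_mkord.
have hc : forall k, (k <= n)%N -> cext (Psi (fun l : 'I_n => g l)) k = p`_(n - k).
  move=> k hk; rewrite /cext; case: k hk => [|k] hk /=.
    rewrite subn0.
    have := monic_prod_XsubC (index_iota 0 n) xpredT g.
    rewrite -/p => /monicP; rewrite lead_coefE /p size_prod_XsubC size_iota subn0 //.
  rewrite /Psi hP /Defs.coord /=.
  by rewrite (@insubT _ (fun m => (m < n)%N) 'I_n k hk).
rewrite -Tprod /Xpoly /TT (reindex_inj rev_ord_inj) /=; apply: eq_bigr => j _.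
have hj : (j <= n)%N by rewrite -ltnS.
by rewrite subSS hc ?leq_subr // subKn.
Qed.

Definition cbd {R : realType} (p : {poly R}) (a : R) := forall k, `|p`_k| <= a.

Lemma cbd_ge0 {R : realType} (p : {poly R}) a : cbd p a -> 0 <= a.
Proof. by move=> h; apply: le_trans (h 0%N). Qed.

Lemma aux4 {R : realType} (A c B r a : R) : `|A| <= a -> `|c| <= a -> `|B| <= a ->
  `|r| <= 2 -> `|A + c - r * B| <= 4 * a.
Proof.
move=> h1 h2 h3 hr.
apply: (le_trans (ler_normB _ _)); rewrite normrM.
have : `|r| * `|B| <= 2 * a by apply: ler_pM.
have := ler_normD A c; lra.
Qed.

Lemma cbdQ {R : realType} (p : {poly R}) a r : `|r| <= 2 -> cbd p a ->
  cbd (p * QQ r) (4 * a).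
Proof.
move=> hr hp k; have a0 := cbd_ge0 _ _ hp.
have e : p * QQ r = p * 'X^2 + p - r *: (p * 'X).
  by rewrite /QQ /UU mulrBr mulrDr mulr1 -scalerAr.
rewrite e coefB coefD coefZ coefMXn coefMX.
have h1 : `|(if (k < 2)%N then 0 else p`_(k - 2))| <= a by case: ifP => _; rewrite ?normr0.
have h2 : `|(if k == 0%N then 0 else p`_k.-1)| <= a by case: ifP => _; rewrite ?normr0.
exact: (aux4 _ _ _ _ _ h1 (hp k) h2 hr).
Qed.

Lemma cbdQ1 {R : realType} r : `|r| <= 2 -> cbd (QQ r : {poly R}) 2.
Proof.
move=> hr k; rewrite /QQ /UU coefB coefD coefZ coefXn coefX coef1.
case: k => [|[|[|k]]] /=; rewrite ?mulr0 ?mulr1 ?subr0 ?add0r ?addr0 ?normrN ?normr1 ?normr0 //; lra.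
Qed.

Lemma cbd_prod {R : realType} (g : nat -> R) k : (forall l, `|g l| <= 2) ->
  cbd (\prod_(0 <= l < k.+1) QQ (g l)) (2 * 4 ^+ k).
Proof.
move=> hg; elim: k => [|k IH].
  by rewrite big_nat1 expr0 mulr1; apply: cbdQ1.
rewrite big_nat_recr //= exprS mulrCA; exact: cbdQ.
Qed.

Fixpoint Cn (k : nat) : nat := if k is k'.+1 then 2 * 4 ^ k' else 1.
Fixpoint Dn (k : nat) : nat := if k is k'.+1 then 4 * Dn k' + Cn k' else 0.

Lemma cbd_prodC {R : realType} (g : nat -> R) k : (forall l, `|g l| <= 2) ->
  cbd (\prod_(0 <= l < k) QQ (g l)) (Cn k)%:R.
Proof.
move=> hg; case: k => [|k].
  by move=> j; rewrite big_geq // coef1; case: (j == 0%N); rewrite ?normr1 ?normr0.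
by rewrite /= natrM natrX; exact: cbd_prod.
Qed.

Lemma cbd_diff {R : realType} (f g : nat -> R) d k :
  (forall l, `|f l| <= 2) -> (forall l, `|g l| <= 2) ->
  (forall l, `|f l - g l| <= d) ->
  cbd (\prod_(0 <= l < k) QQ (f l) - \prod_(0 <= l < k) QQ (g l)) ((Dn k)%:R * d).
Proof.
move=> hf hg hd; have d0 : 0 <= d by apply: le_trans (hd 0%N).
elim: k => [|k IH].
  by move=> j; rewrite !big_geq // subrr coef0 normr0 mul0r.
rewrite !big_nat_recr //=.
set Pf := \prod_(0 <= l < k) QQ (f l); set Pg := \prod_(0 <= l < k) QQ (g l).
have e : Pf * QQ (f k) - Pg * QQ (g k)
    = (Pf - Pg) * QQ (f k) + (g k - f k) *: (Pg * 'X).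
  have hq : QQ (f k) = QQ (g k) + (g k - f k) *: 'X.
    by rewrite /QQ scalerBl addrA subrK.
  rewrite hq -!mul_polyC; ring.
rewrite e => j; rewrite coefD coefZ coefMX.
apply: (le_trans (ler_normD _ _)); rewrite normrM /= natrD natrM [X in _ <= X]mulrDl -[X in _ <= X + _]mulrA.
apply: lerD; first exact: cbdQ.
rewrite mulrC; apply: ler_pM => //.
  by case: ifP => _; [rewrite normr0 | exact: cbd_prodC].
by rewrite distrC.
Qed.

From mathcomp Require Import zify.

Lemma Dn_ge n : (4 ^ n <= Dn n.+1)%N.
Proof.
elim: n => [|n IH] //=.
rewrite expnS; move: IH => /=; lia.
Qed.

Lemma Dn_le n : (16 * Dn n.+2 <= 3 * 6 ^ n.+2)%N.
Proof.
elim: n => [|n IH] //.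
have h := Dn_ge n.+1.
change (Dn n.+3) with (4 * Dn n.+2 + 2 * 4 ^ n.+1)%N.
have e6 : (6 ^ n.+3 = 6 * 6 ^ n.+2)%N := expnS _ _.
rewrite e6; move: IH h; lia.
Qed.

Lemma Dn_real {R : realType} n : (1 < n)%N -> (Dn n)%:R <= c6 R * 6 ^+ n.
Proof.
case: n => [|[|n]] // _.
have h : ((16 * Dn n.+2)%:R <= (3 * 6 ^ n.+2)%:R :> R) by rewrite ler_nat Dn_le.
rewrite natrM natrM natrX in h.
have s0 : 0 <= Num.sqrt (3 : R) by apply: sqrtr_ge0.
have s3 : Num.sqrt (3 : R) ^+ 2 = 3 by rewrite sqr_sqrtr.
have p0 : 0 <= (6 : R) ^+ n.+2 by rewrite exprn_ge0.
rewrite /c6.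
set s := Num.sqrt _ in s0 s3 *; set P := (6 : R) ^+ n.+2 in p0 h *.
have : 3 / 2 <= s by nra.
move: h; set D := (Dn n.+2)%:R; nra.
Qed.

Lemma supnorm_ge0 {R : realType} m (v : 'I_m -> R) : 0 <= supnorm v.
Proof.
rewrite /supnorm; elim/big_ind: _ => //=.
  by move=> a b ha hb; rewrite le_max ha.

Qed.

Lemma le_supnorm {R : realType} m (v : 'I_m -> R) j : `|v j| <= supnorm v.
Proof. exact: le_bigmax. Qed.

Lemma supnorm_le {R : realType} m (v : 'I_m -> R) B :
  0 <= B -> (forall j, `|v j| <= B) -> supnorm v <= B.
Proof. by move=> hB hv; apply/bigmax_leP; split. Qed.

Lemma ext_bd {R : realType} n (x : 'I_n.-1 -> R) k : in_I x -> `|@ext R n x k| <= 2.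
Proof.
move=> [hx _]; rewrite /ext.
case: ifP => _; first by rewrite normrN normr_nat.
case: ifP => _; first by rewrite normr_nat.
rewrite /Defs.coord; case: insub => [j|]; last by rewrite normr0 ler0n.
case: ifP => _; first by rewrite normr0 ler0n.
by have [h1 h2] := hx j; rewrite ler_norml h1 h2.
Qed.

Lemma ext_diff {R : realType} n (x y : 'I_n.-1 -> R) k :
  `|@ext R n x k - @ext R n y k| <= supnorm (fun j => x j - y j).
Proof.
rewrite /ext.
case: ifP => _; first by rewrite subrr normr0 supnorm_ge0.
case: ifP => _; first by rewrite subrr normr0 supnorm_ge0.
rewrite /Defs.coord; case: insub => [j|]; last by rewrite subrr normr0 supnorm_ge0.
case: ifP => _; first by rewrite subrr normr0 supnorm_ge0.
exact: (le_supnorm _ (fun j => x j - y j)).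
Qed.

Definition fD {R : realType} n i (x : 'I_n.-1 -> R) (l : nat) : R :=
  if (l.+1 <= i)%N then @ext R n x l.+1 else @ext R n x l.

Theorem lemma2p3p3 (R : realType) (n : nat) (hn : (1 < n)%N) (i : nat)
    (hi : (i <= n)%N) (x y : 'I_n.-1 -> R) :
  in_I x -> in_I y ->
  supnorm (fun j => Phi (Delta i x) j - Phi (Delta i y) j)
    <= c6 R * (6 ^+ n) * supnorm (fun j => x j - y j).
Proof.
move=> hx hy.
set d := supnorm (fun j => x j - y j).
have d0 : 0 <= d := supnorm_ge0 _ _.
have E : forall (z : 'I_n.-1 -> R) (j : 'I_n), Phi (Delta i z) j
    = (\prod_(0 <= l < n) QQ (fD n i z l))`_(2 * n - j.+1).
  move=> z j; rewrite /Phi /Xmap.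
  by change (Delta i z) with (fun l : 'I_n => fD n i z l); rewrite XpolyPsi.
have hD := @Dn_real R n hn.
have c0 : 0 <= c6 R * 6 ^+ n by apply: le_trans hD.
apply: supnorm_le; first exact: mulr_ge0.
move=> j; rewrite !E -coefB.
have hf : forall z : 'I_n.-1 -> R, in_I z -> forall l, `|fD n i z l| <= 2.
  by move=> z hz l; rewrite /fD; case: ifP => _; apply: ext_bd.
have hd : forall l, `|fD n i x l - fD n i y l| <= d.
  by move=> l; rewrite /fD; case: ifP => _; apply: ext_diff.
have H := cbd_diff (fD n i x) (fD n i y) d n (hf x hx) (hf y hy) hd (2 * n - j.+1)%N.
apply: le_trans H _.
by apply: ler_wpM2r.
Qed.
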